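(* Let $X$ be a (real or complex) separable infinite-dimensional F-space and $T:X\to X$ a continuous linear operator that is quasi-rigid. Then the set $\mathrm{Rec}(T)$ of recurrent vectors of $T$ contains a dense infinite-dimensional vector subspace of $X$.
   Context: An F-space is a completely metrizable topological vector space. $x$ is recurrent for $T$ if $x\in\overline{\{T^nx:n\geq1\}}$; $\mathrm{Rec}(T)$ is the set of such $x$. $T$ is quasi-rigid if there exist a strictly increasing sequence $(n_k)$ of positive integers and a dense $Y\subset X$ with $T^{n_k}x\to x$ for every $x\in Y$. *)

(* Defs.v *)
From HB Require Import structures.
From mathcomp Require Import all_boot all_order all_algebra.
From mathcomp Require Import all_classical all_reals all_analysis.
From mathcomp Require Import complex.
Import Order.TTheory GRing.Theory Num.Theory.
Import numFieldTopology.Exports.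

Set Implicit Arguments.
Unset Strict Implicit.
Unset Printing Implicit Defensive.

Local Open Scope classical_set_scope.
Local Open Scope ring_scope.

Definition RC (R : realType) (b : bool) : numFieldType :=
  if b then (R : numFieldType) else (R[i] : numFieldType).

Definition completely_metrizable (R : realType) (X : topologicalType) : Prop :=
  exists d : X -> X -> R,
    [/\ (forall x y, 0 <= d x y /\ (d x y = 0 <-> x = y)),
        (forall x y, d x y = d y x),
        (forall x y z, d x z <= d x y + d y z),
        (forall A : set X, open A <->
           (forall x, A x -> exists2 e : R, 0 < e & [set y | d x y < e] `<=` A)) &
        (forall u : nat -> X,
           (forall e : R, 0 < e -> exists N : nat,
              forall m n, (N <= m)%N -> (N <= n)%N -> d (u m) (u n) < e) ->
           exists l : X, u @ \oo --> l)].

Definition F_space {R : realType} {b : bool} (X : topologicalLmodType (RC R b)) : Prop :=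
  completely_metrizable R X.

Definition separable (X : topologicalType) : Prop :=
  exists D : set X, countable D /\ dense D.

Definition lin_indep (K : numDomainType) (X : lmodType K) (n : nat)
  (v : 'I_n -> X) : Prop :=
  forall c : 'I_n -> K, \sum_(i < n) c i *: v i = 0 -> forall i, c i = 0.

Definition infinite_dimensional (K : numDomainType) (X : lmodType K) (S : set X) : Prop :=
  forall n : nat, exists v : 'I_n -> X, (forall i, S (v i)) /\ lin_indep v.

Definition vector_subspace (K : numDomainType) (X : lmodType K) (S : set X) : Prop :=
  [/\ S 0, (forall x y, S x -> S y -> S (x + y)) &
      (forall (a : K) x, S x -> S (a *: x))].

Definition recurrent (X : topologicalType) (T : X -> X) (x : X) : Prop :=
  closure [set iter n T x | n in [set n : nat | (1 <= n)%N]] x.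

Definition Rec (X : topologicalType) (T : X -> X) : set X := [set x | recurrent T x].

Definition quasi_rigid (X : topologicalType) (T : X -> X) : Prop :=
  exists (nk : nat -> nat) (Y : set X),
    [/\ (forall k, (0 < nk k)%N), (forall k, (nk k < nk k.+1)%N), dense Y &
        (forall x, Y x -> (fun k => iter (nk k) T x) @ \oo --> x)].

(* Main.v *)
Require Import Defs.
From HB Require Import structures.
From mathcomp Require Import all_boot all_order all_algebra.
From mathcomp Require Import all_classical all_reals all_analysis.
From mathcomp Require Import complex.
Import Order.TTheory GRing.Theory Num.Theory.
Import numFieldTopology.Exports.
Local Open Scope classical_set_scope.
Local Open Scope ring_scope.
Import ArrowAsProduct.
Set Implicit Arguments.
Unset Strict Implicit.
Unset Printing Implicit Defensive.
Section OI.
Variables (K : numFieldType).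

Lemma sumnorm_cont n (r : seq 'I_n) :
  continuous (fun c : 'I_n -> K => \sum_(i <- r) `|c i|).
Proof.
elim: r => [|j r IH].
  have -> : (fun c : 'I_n -> K => \sum_(i <- [::]) `|c i|) = (fun=> 0).
    by apply: funext => c; rewrite big_nil.
  exact: cst_continuous.
have -> : (fun c : 'I_n -> K => \sum_(i <- j :: r) `|c i|) =
   (fun c => `|c j| + \sum_(i <- r) `|c i|).
  by apply: funext => c; rewrite big_cons.
move=> c; have := (@cvgD K K^o _ (nbhs c) _ (fun c : 'I_n -> K => `|c j|) (fun c => \sum_(i <- r) `|c i|)); move=> HH.
apply: (HH _ (`|c j|) (\sum_(i <- r) `|c i|)); last exact: IH.
exact: (continuous_comp (@proj_continuous _ (fun=> K) j c) (@norm_continuous K K^o _)).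
Qed.

Lemma compact_S n (D : set K) : compact D -> [set z | `|z| <= 1] `<=` D ->
  compact [set c : 'I_n -> K | \sum_i `|c i| = 1].
Proof.
move=> cD sD.
have cP : compact [set f : 'I_n -> K | forall i, D (f i)].
  exact: (@tychonoff _ (fun _ => K) (fun _ => D) (fun _ => cD)).
apply: (subclosed_compact _ cP).
  have := (@preimage_closed _ _ (fun c : 'I_n -> K => \sum_i `|c i|) [set y : K | y = 1]); apply.
    by move=> c _; apply: sumnorm_cont.
  apply: accessible_closed_set1; apply: hausdorff_accessible; exact: (@norm_hausdorff K K^o).
move=> c /= Hc i; apply: sD => /=; rewrite -Hc.
rewrite (bigD1 i) //= lerDl; apply: sumr_ge0 => j _; exact: normr_ge0.
Qed.
End OI.

Section LC.
Variables (K : numFieldType) (X : topologicalLmodType K).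

Lemma lc_cont n (r : seq 'I_n) (c : 'I_n -> K) (v : 'I_n -> X) (U : set X) :
  nbhs (\sum_(i <- r) c i *: v i) U ->
  exists A : 'I_n -> set K, exists B : 'I_n -> set X,
   [/\ (forall i, nbhs (c i) (A i)), (forall i, nbhs (v i) (B i)) &
     forall a w, (forall i, A i (a i)) -> (forall i, B i (w i)) ->
       U (\sum_(i <- r) a i *: w i)].
Proof.
elim: r U => [|j r IH] U.
  rewrite big_nil => /nbhs_singleton U0.
  exists (fun _ => setT), (fun _ => setT); split => // [i|i|a w _ _].
  - exact: filterT.
  - exact: filterT.
  - by rewrite big_nil.
rewrite big_cons => nU.
have := @add_continuous X (c j *: v j, \sum_(i <- r) c i *: v i) U nU.
case=> -[U1 U2] /= [nU1 nU2] sU.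
have [A [B [nA nB HAB]]] := IH U2 nU2.
have := @scale_continuous K X (c j, v j) U1 nU1.
case=> -[A0 B0] /= [nA0 nB0] sU0.
exists (fun i => A i `&` (if i == j then A0 else setT)).
exists (fun i => B i `&` (if i == j then B0 else setT)).
split.
- move=> i; apply: filterI => //; case: eqP => [->//|_]; exact: filterT.
- move=> i; apply: filterI => //; case: eqP => [->//|_]; exact: filterT.
move=> a w Ha Hw; rewrite big_cons.
apply: (sU (a j *: w j, \sum_(i <- r) a i *: w i)); split => /=.
  apply: (sU0 (a j, w j)); split => /=.
  + by have [_] := Ha j; rewrite eqxx.
  + by have [_] := Hw j; rewrite eqxx.
apply: HAB => i; [exact: (Ha i).1 | exact: (Hw i).1].
Qed.
End LC.

Section OI2.
Variables (K : numFieldType) (X : topologicalLmodType K).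

Lemma not_indep n (w : 'I_n -> X) : ~ lin_indep w ->
  exists c : 'I_n -> K, \sum_i c i *: w i = 0 /\ exists i, c i != 0.
Proof.
move=> H; apply: contrapT => H2; apply: H => c Hc i.
apply: contrapT => ci; apply: H2; exists c; split => //; exists i; exact/eqP.
Qed.

Lemma normalize n (w : 'I_n -> X) (c : 'I_n -> K) i0 :
  \sum_i c i *: w i = 0 -> c i0 != 0 ->
  exists c' : 'I_n -> K, \sum_i `|c' i| = 1 /\ \sum_i c' i *: w i = 0.
Proof.
move=> Hc ci0.
set s := \sum_i `|c i|.
have s0 : 0 < s.
  apply: (lt_le_trans (_ : 0 < `|c i0|)); first by rewrite normr_gt0.
  rewrite /s (bigD1 i0) //= lerDl; apply: sumr_ge0 => j _; exact: normr_ge0.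
exists (fun i => s^-1 * c i); split.
  have si : `|s^-1| = s^-1 by rewrite ger0_norm // invr_ge0 ltW.
  under eq_bigr do rewrite normrM si.
  by rewrite -mulr_sumr mulVf // gt_eqF.
under eq_bigr do rewrite -scalerA.
by rewrite -scaler_sumr Hc scaler0.
Qed.

Lemma open_indep
  (hD : exists D : set K, compact D /\ [set z | `|z| <= 1] `<=` D)
  (hX : forall y : X, y <> 0 -> exists U, nbhs y U /\ ~ U 0) n (v : 'I_n -> X) :
  lin_indep v -> exists B : 'I_n -> set X, (forall i, nbhs (v i) (B i)) /\
    (forall w, (forall i, B i (w i)) -> lin_indep w).
Proof.
move=> iv; apply: contrapT => nH.
have H : forall B : 'I_n -> set X, (forall i, nbhs (v i) (B i)) ->
    exists c : 'I_n -> K, exists w : 'I_n -> X, [/\ \sum_i `|c i| = 1,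
      (forall i, B i (w i)) & \sum_i c i *: w i = 0].
  move=> B nB; apply: contrapT => nE; apply: nH; exists B; split => // w Bw.
  apply: contrapT => /not_indep [c [Hc [i0 ci0]]].
  have [c' [h1 h2]] := normalize Hc ci0.
  by apply: nE; exists c', w; split.
set S := [set c : 'I_n -> K | \sum_i `|c i| = 1].
have [D [cD sD]] := hD.
have cS : compact S := @compact_S K n D cD sD.
set Idx := [set B : 'I_n -> set X | forall i, nbhs (v i) (B i)].
set Bs := fun B : 'I_n -> set X => [set c : 'I_n -> K | S c /\
   exists w : 'I_n -> X, (forall i, B i (w i)) /\ \sum_i c i *: w i = 0].
have FG : ProperFilter (filter_from Idx Bs).
  apply: filter_from_proper.
    apply: filter_from_filter.
      by exists (fun=> setT) => i; exact: filterT.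
    move=> B1 B2 h1 h2; exists (fun i => B1 i `&` B2 i).
      by move=> i; apply: filterI.
    move=> c [Sc [w [Hw Hs]]]; split; split => //; exists w; split => // i;
      by have [] := Hw i.
  move=> B hB; have [c [w [h1 h2 h3]]] := H B hB.
  by exists c; split => //; exists w; split.
have GS : filter_from Idx Bs S.
  exists (fun=> setT); first by move=> i; exact: filterT.
  by move=> c [].
have [c [Sc clc]] := cS _ FG GS.
have z : \sum_i c i *: v i = 0.
  apply: contrapT => nz; have [U [nU nU0]] := hX _ nz.
  have [A [B [nA nB HAB]]] := lc_cont nU.
  have nPA : nbhs c [set a : 'I_n -> K | forall i, A i (a i)].
    apply: (@filter_forall _ 'I_n (fun i (a : 'I_n -> K) => A i (a i)) (nbhs c)) => i.
    have := @proj_continuous _ (fun=> K) i c (A i) (nA i). apply.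
  have GB : filter_from Idx Bs (Bs B) by exists B.
  have [a [[Sa [w [Bw Hw]]] Aa]] := clc _ _ GB nPA.
  by apply: nU0; rewrite -Hw; exact: HAB.
have c0 := iv c z.
have E : \sum_i `|c i| = 0 by apply: big1 => i _; rewrite c0 normr0.
by move: Sc; rewrite /S /= E => /esym/eqP; rewrite oner_eq0.
Qed.
End OI2.

Section CPX.
Local Open Scope complex_scope.
Lemma ballR (R : realType) : exists D : set (RC R true), compact D /\ [set z | `|z| <= 1] `<=` D.
Proof.
exists `[-1, 1]%classic; split; first exact: segment_compact.
by move=> z /= hz; rewrite in_itv /= -ler_norml.
Qed.

Lemma normcR (R : rcfType) (x : R) : `|x%:C| = `|x|%:C.
Proof. by rewrite normc_def /= expr0n /= addr0 sqrtr_sqr. Qed.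

Lemma RC_cont (R : realType) : continuous (fun x : R => (x%:C : RC R false)).
Proof.
move=> x; apply/(@cvgrPdist_lt _ (RC R false)^o) => -[a b]; rewrite ltcE /= => /andP [/eqP b0 a0].
near=> t.
rewrite -rmorphB normcR b0 complexr0 ltcR.
near: t.
by exists a.
Unshelve. all: by end_near.
Qed.

Lemma normci (R : rcfType) : `|'i : R[i]| = 1.
Proof. by rewrite normc_def /= expr0n expr1n add0r sqrtr1. Qed.

Lemma ballC (R : realType) : exists D : set (RC R false), compact D /\ [set z | `|z| <= 1] `<=` D.
Proof.
pose f := fun p : R * R => (p.1%:C + 'i * p.2%:C : RC R false).
exists (f @` (`[-1,1]%classic `*` `[-1,1]%classic)); split.
  apply: continuous_compact; last first.
    by apply: compact_setX; exact: segment_compact.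
  apply: continuous_subspaceT => p.
  apply: (@cvgD _ (RC R false)^o).
    apply: continuous_comp; [exact: cvg_fst | exact: RC_cont].
  apply: cvgMl_tmp.
  apply: continuous_comp; [exact: cvg_snd | exact: RC_cont].
move=> z /= hz; exists (complex.Re z, complex.Im z).
  split; rewrite /= in_itv /= -ler_norml -lecR; apply: le_trans hz.
    exact: normc_ge_Re.
  have := normc_ge_Re (z * 'i); rewrite ReiNIm normrN normrM normci mulr1.
  done.
by rewrite /f /= [RHS]complexE.
Qed.
End CPX.

Lemma ballRC (R : realType) b :
  exists D : set (RC R b), compact D /\ [set z | `|z| <= 1] `<=` D.
Proof. by case: b; [exact: ballR | exact: ballC]. Qed.

Lemma hausX (R : realType) b (X : topologicalLmodType (RC R b)) :
  F_space X -> forall y : X, y <> 0 -> exists U, nbhs y U /\ ~ U 0.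
Proof.
move=> [d [dpos dsym dtri dopen dcomp]] y y0.
have dy0 : 0 < d y 0.
  rewrite lt_def (dpos y 0).1 andbT; apply/eqP => /(dpos y 0).2; exact: y0.
have dyy : d y y = 0 by apply/(dpos y y).2.
exists [set z | d y z < d y 0]; split; last by rewrite /= ltxx.
apply: open_nbhs_nbhs; split; last by rewrite /= dyy.
apply/dopen => x /= hx; exists (d y 0 - d y x); first by rewrite subr_gt0.
move=> z /= hz; apply: (le_lt_trans (dtri y x z)).
by rewrite -ltrBrDl.
Qed.

Theorem mainTheorem4 (R : realType) (b : bool) (X : topologicalLmodType (RC R b))
  (T : {linear X -> X}) :
  F_space X -> separable X -> infinite_dimensional [set: X] ->
  continuous T -> quasi_rigid T ->
  exists M : set X,
    [/\ vector_subspace M, dense M, infinite_dimensional M & M `<=` Rec T].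
Proof.
move=> FX _ infX _ [nk [Y [nk0 nkinc dY HY]]].
have hX := hausX FX.
have iterD m x y : iter m T (x + y) = iter m T x + iter m T y.
  by elim: m => //= m ->; rewrite linearD.
have iterZ m (a : RC R b) x : iter m T (a *: x) = a *: iter m T x.
  by elim: m => //= m ->; rewrite linearZ.
have iter0 m : iter m T 0 = 0.
  by elim: m => //= m ->; rewrite linear0.
set M := [set x : X | (fun k => iter (nk k) T x) @ \oo --> x].
have dM : dense M.
  move=> O O0 oO; have [z [Oz Yz]] := dY O O0 oO.
  by exists z; split => //; exact: HY.
exists M; split => //.
- split.
  + rewrite /M /=.
    have -> : (fun k => iter (nk k) T 0) = (fun=> 0) by apply: funext => k.
    exact: cvg_cst.
  + move=> x y Hx Hy; rewrite /M /=.
    have -> : (fun k => iter (nk k) T (x + y)) =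
        (fun k => iter (nk k) T x + iter (nk k) T y).
      by apply: funext => k; rewrite iterD.
    exact: (cvg_comp _ _ (cvg_pair Hx Hy) (@add_continuous X (x, y))).
  + move=> a x Hx; rewrite /M /=.
    have -> : (fun k => iter (nk k) T (a *: x)) =
        (fun k => a *: iter (nk k) T x).
      by apply: funext => k; rewrite iterZ.
    exact: (cvg_comp _ _ (cvg_pair (cvg_cst (a : (RC R b)^o)) Hx)
       (@scale_continuous _ X (a, x))).
- move=> n; have [v [_ iv]] := infX n.
  have [B [nB HB]] := open_indep (ballRC R b) hX iv.
  have : forall i, exists w, M w /\ B i w.
    move=> i; move: (nB i); rewrite nbhsE; case=> O [oO Ov] sOB.
    have [w [Ow Mw]] := dM O (ex_intro _ (v i) Ov) oO.
    by exists w; split => //; exact: sOB.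
  move/choice => [w Hw]; exists w; split => [i|]; first exact: (Hw i).1.
  by apply: HB => i; exact: (Hw i).2.
- move=> x Hx B nB.
  have [N _ HN] := Hx B nB.
  exists (iter (nk N) T x); split => //.
    by exists (nk N) => //; exact: nk0.
  exact: (HN N (leqnn N)).
Qed.
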